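(* Let $d\ge2$ and $p\ge1$ be integers and let $\mathbb{P}_k^{(d)}$ be the uniform probability measure on $\mathcal{C}_k^{(d)}$. Then with $\kappa_{p,d}:=(2pd^pe^p)^{-1}$, $$\mathbb{P}_k^{(d)}(T\text{ is not }p\text{-perfect})\le e^{-\kappa_{p,d}(k-p)_+}\qquad\text{for all }k\in\mathbb{N},$$ where $x_+=\max(x,0)$.
   Context: A $d$-Catalan tree is a rooted planar tree in which every vertex has $0$ or $d$ children; $\mathcal{C}_k^{(d)}$ is the set of such trees with $k$ internal (non-leaf) vertices. A tree $T$ is $p$-perfect if it contains a path $(v_0,\dots,v_p)$, with $v_i$ a child of $v_{i-1}$ for each $i$, such that each of the $(d-1)p$ siblings of $v_1,\dots,v_p$ is a leaf. *)

(* Defs.v *)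
From Stdlib Require Import Reals List Arith Bool.
Import ListNotations.
Open Scope bool_scope.

(* Rooted planar (ordered) trees: a vertex is the ordered list of its
   children; a leaf is [Node nil]. *)
Inductive tree : Type := Node : list tree -> tree.

Definition leaf : tree := Node nil.

Definition is_leaf (t : tree) : bool :=
  match t with Node nil => true | _ => false end.

Fixpoint is_dtree (d : nat) (t : tree) : bool :=
  match t with
  | Node cs =>
      (match cs with nil => true | _ => Nat.eqb (length cs) d end)
      && forallb (is_dtree d) cs
  end.

Fixpoint internal (t : tree) : nat :=
  match t with
  | Node nil => 0
  | Node cs => S (list_sum (map internal cs))
  end.

(* [perfect_from p v]: there is a downward path (v = v_0, v_1, ..., v_p)
   starting at v, v_i a child of v_{i-1}, such that every sibling of each
   v_i (i >= 1) is a leaf. Siblings are distinguished by their position. *)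
Fixpoint perfect_from (p : nat) (t : tree) {struct p} : bool :=
  match p with
  | 0 => true
  | S p' =>
      match t with
      | Node cs =>
          existsb (fun i =>
            forallb (fun j => Nat.eqb j i || is_leaf (nth j cs leaf))
                    (seq 0 (length cs))
            && perfect_from p' (nth i cs leaf))
          (seq 0 (length cs))
      end
  end.

Fixpoint is_perfect (p : nat) (t : tree) {struct t} : bool :=
  match t with
  | Node cs => perfect_from p t || existsb (is_perfect p) cs
  end.

Definition kappa (p d : nat) : R :=
  / (2 * INR p * INR d ^ p * exp 1 ^ p).

(* Main.v *)
Require Import Defs.
From Stdlib Require Import Reals List Arith Lia Lra Bool Classical.
Import ListNotations.

Fixpoint tree_ind2 (P : tree -> Prop)
  (H : forall cs, Forall P cs -> P (Node cs)) (t : tree) : P t :=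
  match t with
  | Node cs => H cs ((fix f (l : list tree) : Forall P l :=
                 match l with
                 | nil => Forall_nil P
                 | x :: l' => Forall_cons x (tree_ind2 P H x) (f l')
                 end) cs)
  end.

Definition expand (d : nat) (f : list tree) : list tree :=
  Node (firstn d f) :: skipn d f.

Fixpoint enumE (d m : nat) {struct m} : nat -> list (list tree) :=
  fix g (s : nat) : list (list tree) :=
    match s with
    | 0 => match m with 0 => [[]] | S _ => [] end
    | S s' => map (cons leaf) (g s') ++
              match m with 0 => [] | S m' => map (expand d) (enumE d m' (s' + d)) end
    end.

Definition isF (d s m : nat) (f : list tree) : Prop :=
  length f = s /\ Forall (fun t => is_dtree d t = true) f /\
  list_sum (map internal f) = m.

Lemma internal_node (cs : list tree) : cs <> [] ->
  internal (Node cs) = S (list_sum (map internal cs)).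
Proof. destruct cs; [congruence| reflexivity]. Qed.

Lemma is_dtree_eq d cs : is_dtree d (Node cs) =
  ((match cs with [] => true | _ => length cs =? d end) && forallb (is_dtree d) cs)%bool.
Proof. reflexivity. Qed.

Lemma dtree_node_intro d cs : 1 <= d -> length cs = d ->
  Forall (fun t => is_dtree d t = true) cs -> is_dtree d (Node cs) = true.
Proof.
  intros Hd Hl HF. rewrite is_dtree_eq. destruct cs as [|c cs'].
  - simpl in Hl. lia.
  - change (((length (c::cs') =? d) && forallb (is_dtree d) (c::cs'))%bool = true).
    replace (length (c::cs') =? d) with true by (symmetry; apply Nat.eqb_eq; auto).
    change (forallb (is_dtree d) (c::cs') = true). apply forallb_forall. intros x Hx. rewrite Forall_forall in HF. apply HF; auto.
Qed.

Lemma dtree_node_elim d cs : is_dtree d (Node cs) = true ->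
  cs = [] \/ (length cs = d /\ Forall (fun t => is_dtree d t = true) cs).
Proof.
  intros H. destruct cs as [|c cs']; [left; auto|right].
  rewrite is_dtree_eq in H.
  apply andb_true_iff in H as [H1 H2]. split.
  - apply Nat.eqb_eq; auto.
  - apply Forall_forall. intros x Hx. rewrite forallb_forall in H2. auto.
Qed.

Lemma firstn_app_len {A} (l1 l2 : list A) : firstn (length l1) (l1 ++ l2) = l1.
Proof. induction l1; simpl; [reflexivity| f_equal; auto]. Qed.
Lemma skipn_app_len {A} (l1 l2 : list A) : skipn (length l1) (l1 ++ l2) = l2.
Proof. induction l1; simpl; auto. Qed.

Lemma list_sum_map_app {A} (g : A -> nat) l1 l2 :
  list_sum (map g (l1 ++ l2)) = list_sum (map g l1) + list_sum (map g l2).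
Proof. rewrite map_app, list_sum_app. reflexivity. Qed.

Lemma mem_enumE (d : nat) : 1 <= d -> forall m s f,
  In f (enumE d m s) <-> isF d s m f.
Proof.
  intros Hd m. induction m as [|m IHm]; intros s; induction s as [|s IHs]; intros f.
  - simpl. split.
    + intros [<-|[]]. repeat split; auto.
    + intros [H1 _]. destruct f; [auto| discriminate].
  - simpl. rewrite app_nil_r, in_map_iff. split.
    + intros [f' [<- Hf']]. apply IHs in Hf' as [H1 [H2 H3]].
      repeat split; simpl; auto.
    + intros [H1 [H2 H3]]. destruct f as [|t f]; [discriminate|].
      simpl in H1, H3. inversion H2; subst.
      assert (internal t = 0) by lia.
      destruct t as [cs]. destruct cs; [|simpl in H; discriminate].
      exists f. split; auto. apply IHs. repeat split; auto; lia.
  - simpl. split; [intros []|]. intros [H1 [_ H]]. destruct f; [|discriminate].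
    simpl in H. discriminate.
  - simpl. rewrite in_app_iff, !in_map_iff. split.
    + intros [[f' [<- Hf']]|[f' [<- Hf']]].
      * apply IHs in Hf' as [H1 [H2 H3]]. repeat split; simpl; auto.
      * apply IHm in Hf' as [H1 [H2 H3]].
        pose proof (firstn_skipn d f') as Hfs.
        assert (Hlf : length (firstn d f') = d) by (rewrite length_firstn; lia).
        rewrite <- Hfs in H2, H3. apply Forall_app in H2 as [H2a H2b].
        rewrite list_sum_map_app in H3.
        unfold expand. repeat split.
        -- simpl. rewrite length_skipn. lia.
        -- constructor; auto. apply dtree_node_intro; auto.
        -- cbn [map list_sum fold_right]. rewrite internal_node.
           ++ unfold list_sum in H3 |- *. set (u := fold_right _ _ (map internal (firstn d f'))) in *. set (v := fold_right _ _ (map internal (skipn d f'))) in *. lia.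
           ++ intros E. rewrite E in Hlf. simpl in Hlf. lia.
    + intros [H1 [H2 H3]]. destruct f as [|t f]; [discriminate|].
      simpl in H1, H3. inversion H2; subst.
      destruct t as [cs]. destruct (dtree_node_elim _ _ H4) as [->|[Hl HF]].
      * left. exists f. split; auto. apply IHs. repeat split; auto; simpl in H3; lia.
      * right. assert (cs <> []) by (intros ->; simpl in Hl; lia).
        rewrite internal_node in H3 by auto.
        exists (cs ++ f). split.
        -- unfold expand. rewrite <- Hl, firstn_app_len, skipn_app_len. reflexivity.
        -- apply IHm. repeat split.
           ++ rewrite length_app. lia.
           ++ apply Forall_app; auto.
           ++ rewrite list_sum_map_app. lia.
Qed.

Lemma NoDup_map_on {A B} (g : A -> B) (l : list A) :
  (forall x y, In x l -> In y l -> g x = g y -> x = y) -> NoDup l -> NoDup (map g l).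
Proof.
  induction l as [|a l IH]; intros Hinj Hnd; simpl; constructor.
  - inversion Hnd; subst. intros Hin. apply in_map_iff in Hin as [x [Hx Hin]].
    assert (x = a) by (apply Hinj; [right; exact Hin| left; reflexivity| exact Hx]).
    subst; auto.
  - inversion Hnd; subst. apply IH; auto. intros x y Hx Hy E.
    apply Hinj; [right; exact Hx| right; exact Hy| exact E].
Qed.

Lemma NoDup_enumE (d : nat) : 1 <= d -> forall m s, NoDup (enumE d m s).
Proof.
  intros Hd m. induction m as [|m IHm]; intros s; induction s as [|s IHs].
  - simpl. constructor; [intros []| constructor].
  - simpl. rewrite app_nil_r. apply NoDup_map_on; auto.
    intros x y _ _ H; inversion H; auto.
  - simpl. constructor.
  - simpl. apply NoDup_app.
    + apply NoDup_map_on; auto. intros x y _ _ H; inversion H; auto.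
    + apply NoDup_map_on; auto.
      intros x y Hx Hy E. unfold expand in E. injection E as E1 E2.
      rewrite <- (firstn_skipn d x), <- (firstn_skipn d y), E1, E2. reflexivity.
    + intros a Ha Hb. apply in_map_iff in Ha as [x [<- _]].
      apply in_map_iff in Hb as [y [Hy Hyin]]. unfold expand in Hy.
      apply mem_enumE in Hyin as [Hl _]; auto.
      injection Hy as Hy1 _.
      assert (length (firstn d y) = d) by (rewrite length_firstn; lia).
      rewrite Hy1 in H. simpl in H. lia.
Qed.

Definition a (d s m : nat) : nat := length (enumE d m s).

Lemma a_s0 d s : a d s 0 = 1.
Proof. unfold a. induction s; [reflexivity|]. cbn [enumE]. rewrite length_app, length_map. cbn [enumE] in IHs. rewrite IHs. simpl. lia. Qed.
Lemma a_0S d m : a d 0 (S m) = 0.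
Proof. reflexivity. Qed.
Lemma a_SS d s m : a d (S s) (S m) = a d s (S m) + a d (s + d) m.
Proof. unfold a. simpl. rewrite length_app, !length_map. reflexivity. Qed.

Lemma a_closed d' : forall m s0,
  a (S d') (S s0) m * fact m * fact (d' * m + S s0) = S s0 * fact (S d' * m + s0).
Proof.
  intros m. induction m as [|m IHm]; intros s0.
  - rewrite a_s0. rewrite !Nat.mul_0_r, !Nat.add_0_l. simpl fact at 1. rewrite fact_simpl. lia.
  - induction s0 as [|s0 IHs].
    + rewrite a_SS, a_0S. change (0 + S d') with (S d'). rewrite Nat.add_0_l.
      pose proof (IHm d') as H. 
      replace (d' * S m + 1) with (d' * m + S d') by lia.
      replace (S d' * S m + 0) with (S (S d' * m + d')) by lia.
      rewrite (fact_simpl (S d' * m + d')), (fact_simpl m).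
      transitivity (S m * (a (S d') (S d') m * fact m * fact (d' * m + S d'))).
      * ring.
      * rewrite H. ring.
    + rewrite a_SS.
      pose proof (IHm (s0 + S d')) as H2.
      replace (S s0 + S d') with (S (s0 + S d')) by lia.
      set (A1 := a (S d') (S s0) (S m)) in *.
      set (A2 := a (S d') (S (s0 + S d')) m) in *.
      replace (S d' * m + (s0 + S d')) with (S d' * S m + s0) in H2 by lia.
      replace (d' * m + S (s0 + S d')) with (S (d' * S m + S s0)) in H2 by lia.
      replace (d' * S m + S (S s0)) with (S (d' * S m + S s0)) by lia.
      replace (S d' * S m + S s0) with (S (S d' * S m + s0)) by lia.
      rewrite fact_simpl in H2 |- *. rewrite fact_simpl. rewrite (fact_simpl m) in IHs.
      set (X := fact (S d' * S m + s0)) in *.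
      set (Y := fact (d' * S m + S s0)) in *.
      set (fm := fact m) in *.
      set (K := S (d' * S m + S s0)).
      transitivity (K * (A1 * (S m * fm) * Y) + S m * (A2 * fm * (K * Y))).
      * unfold K. ring.
      * rewrite IHs. unfold K. rewrite H2. rewrite fact_simpl. fold X. ring.
Qed.

Definition enumT (d j : nat) : list tree := map (hd leaf) (enumE d j 1).

Lemma mem_enumT d : 1 <= d -> forall j t,
  In t (enumT d j) <-> (is_dtree d t = true /\ internal t = j).
Proof.
  intros Hd j t. unfold enumT. rewrite in_map_iff. split.
  - intros [f [<- Hf]]. apply mem_enumE in Hf as [H1 [H2 H3]]; auto.
    destruct f as [|t' [|]]; try discriminate. simpl in *. inversion H2; subst.
    split; auto; unfold list_sum in H3; simpl in H3; lia.
  - intros [H1 H2]. exists [t]. split; auto. apply mem_enumE; auto.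
    repeat split; auto. simpl; lia.
Qed.

Lemma NoDup_enumT d : 1 <= d -> forall j, NoDup (enumT d j).
Proof.
  intros Hd j. unfold enumT. apply NoDup_map_on; [|apply NoDup_enumE; auto].
  intros x y Hx Hy E. apply mem_enumE in Hx as [Hx _]; auto.
  apply mem_enumE in Hy as [Hy _]; auto.
  destruct x as [|x [|]]; try discriminate. destruct y as [|y [|]]; try discriminate.
  simpl in E. subst; auto.
Qed.

Lemma length_enumT d j : length (enumT d j) = a d 1 j.
Proof. unfold enumT, a. rewrite length_map. reflexivity. Qed.

Lemma same_length {A} (l1 l2 : list A) : NoDup l1 -> NoDup l2 ->
  (forall x, In x l1 <-> In x l2) -> length l1 = length l2.
Proof.
  intros H1 H2 H. apply Nat.le_antisymm; apply NoDup_incl_length; auto;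
  intros x Hx; apply H; auto.
Qed.

Lemma NoDup_flat_map' {A B} (f : A -> list B) (l : list A) : NoDup l ->
  (forall x, In x l -> NoDup (f x)) ->
  (forall x y z, In x l -> In y l -> In z (f x) -> In z (f y) -> x = y) ->
  NoDup (flat_map f l).
Proof.
  induction l as [|x l IH]; intros Hnd Hf Hdis; simpl; [constructor|].
  inversion Hnd; subst. apply NoDup_app.
  - apply Hf; left; auto.
  - apply IH; auto.
    + intros; apply Hf; right; auto.
    + intros u v z Hu Hv Hz1 Hz2. apply (Hdis u v z); auto; right; auto.
  - intros z Hz1 Hz2. apply in_flat_map in Hz2 as [y [Hy Hz2]].
    assert (x = y) by (apply (Hdis x y z); auto; [left; auto|right; auto]).
    subst; contradiction.
Qed.

Definition Lc (d s m : nat) : list (list tree) :=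
  flat_map (fun j => flat_map (fun t => map (cons t) (enumE d (m - j) s)) (enumT d j))
    (seq 0 (S m)).

Lemma mem_Lc d : 1 <= d -> forall s m f, In f (Lc d s m) <-> isF d (S s) m f.
Proof.
  intros Hd s m f. unfold Lc. rewrite in_flat_map. split.
  - intros [j [Hj Hf]]. apply in_seq in Hj.
    apply in_flat_map in Hf as [t [Ht Hf]]. apply in_map_iff in Hf as [g [<- Hg]].
    apply mem_enumT in Ht as [Ht1 Ht2]; auto. apply mem_enumE in Hg as [H1 [H2 H3]]; auto.
    repeat split; simpl; auto. unfold list_sum in H3 |- *. simpl. lia.
  - intros [H1 [H2 H3]]. destruct f as [|t g]; [discriminate|].
    apply Forall_cons_iff in H2 as [Ht Hg]. simpl in H1.
    unfold list_sum in H3. simpl in H3.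
    exists (internal t). split.
    + apply in_seq. lia.
    + apply in_flat_map. exists t. split.
      * apply mem_enumT; auto.
      * apply in_map. apply mem_enumE; auto. repeat split; auto.
        unfold list_sum. lia.
Qed.

Lemma NoDup_Lc d : 1 <= d -> forall s m, NoDup (Lc d s m).
Proof.
  intros Hd s m. unfold Lc. apply NoDup_flat_map'.
  - apply seq_NoDup.
  - intros j _. apply NoDup_flat_map'.
    + apply NoDup_enumT; auto.
    + intros t _. apply NoDup_map_on; [|apply NoDup_enumE; auto].
      intros x y _ _ E; inversion E; auto.
    + intros t1 t2 z _ _ H1 H2. apply in_map_iff in H1 as [g1 [<- _]].
      apply in_map_iff in H2 as [g2 [E _]]. inversion E; auto.
  - intros j1 j2 z _ _ H1 H2.
    apply in_flat_map in H1 as [t1 [Ht1 H1]]. apply in_flat_map in H2 as [t2 [Ht2 H2]].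
    apply in_map_iff in H1 as [g1 [<- _]]. apply in_map_iff in H2 as [g2 [E _]].
    inversion E; subst. apply mem_enumT in Ht1 as [_ <-]; auto.
    apply mem_enumT in Ht2 as [_ <-]; auto.
Qed.

Definition nfq (d : nat) (q : tree -> bool) (s m : nat) : nat :=
  length (filter (forallb q) (enumE d m s)).
Definition ntq (d : nat) (q : tree -> bool) (j : nat) : nat :=
  length (filter q (enumT d j)).

Lemma filter_flat_map {A B} (P : B -> bool) (f : A -> list B) l :
  filter P (flat_map f l) = flat_map (fun x => filter P (f x)) l.
Proof. induction l; simpl; auto. rewrite filter_app, IHl. reflexivity. Qed.

Lemma inner_count (q : tree -> bool) (T : list tree) (L : list (list tree)) :
  length (flat_map (fun t => filter (forallb q) (map (cons t) L)) T)
  = length (filter q T) * length (filter (forallb q) L).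
Proof.
  induction T as [|t T IH]; simpl; auto.
  rewrite length_app, IH.
  assert (E : filter (forallb q) (map (cons t) L) =
              if q t then map (cons t) (filter (forallb q) L) else []).
  { clear IH. induction L as [|g L IHL]; simpl; [destruct (q t); reflexivity|].
    rewrite IHL. destruct (q t); simpl; [destruct (forallb q g); reflexivity|reflexivity]. }
  rewrite E. destruct (q t); simpl; [rewrite length_map|]; lia.
Qed.

Lemma NoDup_filter' {A} (P : A -> bool) l : NoDup l -> NoDup (filter P l).
Proof.
  induction l as [|x l IH]; intros H; simpl; [constructor|]. inversion H; subst.
  destruct (P x); auto. constructor; auto. rewrite filter_In. intros [? _]; auto.
Qed.

Lemma nfq_conv d q : 1 <= d -> forall s m,
  nfq d q (S s) m = list_sum (map (fun j => ntq d q j * nfq d q s (m - j)) (seq 0 (S m))).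
Proof.
  intros Hd s m. unfold nfq at 1.
  rewrite (same_length _ (filter (forallb q) (Lc d s m))).
  - unfold Lc. rewrite filter_flat_map, length_flat_map. f_equal. apply map_ext.
    intros j. rewrite filter_flat_map, inner_count. reflexivity.
  - apply NoDup_filter', NoDup_enumE; auto.
  - apply NoDup_filter', NoDup_Lc; auto.
  - intros x. rewrite !filter_In, mem_enumE, mem_Lc; auto. reflexivity.
Qed.

Lemma filter_true {A} (l : list A) (P : A -> bool) :
  (forall x, P x = true) -> filter P l = l.
Proof. intros H; induction l; simpl; auto. rewrite H, IHl; auto. Qed.

Lemma a_conv d : 1 <= d -> forall s m,
  a d (S s) m = list_sum (map (fun j => a d 1 j * a d s (m - j)) (seq 0 (S m))).
Proof.
  intros Hd s m. pose proof (nfq_conv d (fun _ => true) Hd s m) as H.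
  unfold nfq, ntq in H.
  assert (E : forall s m, filter (forallb (fun _ : tree => true)) (enumE d m s) = enumE d m s).
  { intros. apply filter_true. intros x. induction x; simpl; auto. }
  rewrite E in H. unfold a. rewrite H. f_equal. apply map_ext. intros j.
  rewrite E, filter_true by auto. rewrite length_enumT. reflexivity.
Qed.

Definition NPp (p : nat) (t : tree) : bool := negb (is_perfect p t).

Lemma is_perfect_eq p cs : is_perfect p (Node cs) =
  (perfect_from p (Node cs) || existsb (is_perfect p) cs)%bool.
Proof. reflexivity. Qed.

Lemma perfect_from_eq n cs : perfect_from (S n) (Node cs) =
  existsb (fun i =>
            (forallb (fun j => Nat.eqb j i || is_leaf (nth j cs leaf))
                    (seq 0 (length cs))
            && perfect_from n (nth i cs leaf))%bool)
          (seq 0 (length cs)).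
Proof. reflexivity. Qed.

Lemma NP_children p cs : NPp p (Node cs) = true -> forallb (NPp p) cs = true.
Proof.
  unfold NPp. rewrite is_perfect_eq. intros H. apply negb_true_iff, orb_false_iff in H as [_ H].
  apply forallb_forall. intros x Hx. apply negb_true_iff.
  destruct (is_perfect p x) eqn:E; auto.
  assert (existsb (is_perfect p) cs = true) by (apply existsb_exists; eauto). congruence.
Qed.

Lemma length_filter_map {A B} (P : B -> bool) (g : A -> B) l :
  length (filter P (map g l)) = length (filter (fun x => P (g x)) l).
Proof. induction l as [|x l IH]; simpl; auto. destruct (P (g x)); simpl; auto. Qed.

Lemma filter_length_mono {A} (P Q : A -> bool) l :
  (forall x, In x l -> P x = true -> Q x = true) -> length (filter P l) <= length (filter Q l).
Proof.
  induction l as [|x l IH]; intros H; simpl; auto.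
  destruct (P x) eqn:E1.
  - rewrite (H x (or_introl eq_refl) E1). simpl. apply le_n_S, IH. intros; apply H; auto; right; auto.
  - destruct (Q x); simpl; [apply le_S|]; apply IH; intros; apply H; auto; right; auto.
Qed.

Lemma filter_length_le {A} (P : A -> bool) l : length (filter P l) <= length l.
Proof. induction l as [|x l IH]; simpl; auto. destruct (P x); simpl; lia. Qed.

Lemma enumT_S d k : enumT d (S k) = map (fun f => Node (firstn d f)) (enumE d k d).
Proof. unfold enumT. simpl. rewrite map_map. reflexivity. Qed.

Lemma nt_S_le d p : 1 <= d -> forall k, ntq d (NPp p) (S k) <= nfq d (NPp p) d k.
Proof.
  intros Hd k. unfold ntq, nfq. rewrite enumT_S, length_filter_map.
  apply filter_length_mono. intros f Hf H.
  apply mem_enumE in Hf as [Hl _]; auto.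
  rewrite firstn_all2 in H by lia. apply NP_children; auto.
Qed.

Lemma nt_le_a d p k : ntq d (NPp p) k <= a d 1 k.
Proof. unfold ntq. rewrite <- length_enumT. apply filter_length_le. Qed.

Lemma filter_split {A} (P : A -> bool) l :
  length (filter P l) + length (filter (fun x => negb (P x)) l) = length l.
Proof. induction l as [|x l IH]; simpl; auto. destruct (P x); simpl; lia. Qed.

Fixpoint chain (d : nat) (sg : list nat) : tree :=
  match sg with
  | [] => Node (repeat leaf d)
  | i :: sg' => Node (map (fun j => if Nat.eqb j i then chain d sg' else leaf) (seq 0 d))
  end.

Lemma sum_indicator (i x : nat) : forall n st,
  list_sum (map (fun j => if Nat.eqb j i then x else 0) (seq st n)) =
  if ((st <=? i) && (i <? st + n))%bool then x else 0.
Proof.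
  induction n as [|n IH]; intros st; cbn [seq map list_sum fold_right].
  - destruct (Nat.leb_spec st i), (Nat.ltb_spec i (st + 0)); simpl; auto; lia.
  - unfold list_sum in IH. rewrite IH.
    destruct (Nat.eqb_spec st i), (Nat.leb_spec st i), (Nat.ltb_spec i (st + S n)),
      (Nat.leb_spec (S st) i), (Nat.ltb_spec i (S st + n)); simpl; lia.
Qed.

Lemma internal_chain_map (d i : nat) (c : tree) :
  map internal (map (fun j => if Nat.eqb j i then c else leaf) (seq 0 d)) =
  map (fun j => if Nat.eqb j i then internal c else 0) (seq 0 d).
Proof. rewrite map_map. apply map_ext. intros j. destruct (j =? i); reflexivity. Qed.

Definition validS (d : nat) (sg : list nat) : Prop := Forall (fun i => i < d) sg.

Lemma repeat_leaf_sum d : list_sum (map internal (repeat leaf d)) = 0.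
Proof. induction d; simpl; auto. Qed.

Lemma internal_chain d : 1 <= d -> forall sg, validS d sg ->
  internal (chain d sg) = S (length sg).
Proof.
  intros Hd sg. induction sg as [|i sg IH]; intros Hv.
  - simpl chain. rewrite internal_node.
    + rewrite repeat_leaf_sum. reflexivity.
    + destruct d; [lia|]. simpl; discriminate.
  - inversion Hv; subst. simpl chain. rewrite internal_node.
    + rewrite internal_chain_map, sum_indicator, IH by auto.
      destruct (Nat.leb_spec 0 i), (Nat.ltb_spec i (0 + d)); simpl; lia.
    + destruct d; [lia|]. simpl; discriminate.
Qed.

Lemma dtree_chain d : 1 <= d -> forall sg, is_dtree d (chain d sg) = true.
Proof.
  intros Hd sg. induction sg as [|i sg IH].
  - simpl chain. apply dtree_node_intro; auto.
    + apply repeat_length.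
    + apply Forall_forall. intros x Hx. apply repeat_spec in Hx. subst. reflexivity.
  - simpl chain. apply dtree_node_intro; auto.
    + rewrite length_map, length_seq; auto.
    + apply Forall_forall. intros x Hx. apply in_map_iff in Hx as [j [<- _]].
      destruct (j =? i); auto.
Qed.

Lemma nth_chain_list d i c j : j < d ->
  nth j (map (fun j => if Nat.eqb j i then c else leaf) (seq 0 d)) leaf =
  if Nat.eqb j i then c else leaf.
Proof.
  intros Hj. set (g := fun j => if Nat.eqb j i then c else leaf).
  transitivity (nth j (map g (seq 0 d)) (g 0)).
  - apply nth_indep. rewrite length_map, length_seq; auto.
  - rewrite map_nth, seq_nth by auto. reflexivity.
Qed.

Lemma perfect_chain d : 1 <= d -> forall sg, validS d sg ->
  perfect_from (S (length sg)) (chain d sg) = true.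
Proof.
  intros Hd sg. induction sg as [|i sg IH]; intros Hv.
  - simpl chain. rewrite perfect_from_eq. apply existsb_exists. exists 0. split.
    + apply in_seq. rewrite repeat_length. lia.
    + apply andb_true_iff. split; [|reflexivity].
      apply forallb_forall. intros j Hj. apply orb_true_iff. right.
      apply in_seq in Hj. rewrite repeat_length in Hj.
      rewrite nth_repeat. reflexivity.
  - inversion Hv; subst. simpl chain. rewrite perfect_from_eq.
    rewrite length_map, length_seq. apply existsb_exists. exists i. split.
    + apply in_seq. lia.
    + apply andb_true_iff. split.
      * apply forallb_forall. intros j Hj. apply in_seq in Hj.
        rewrite nth_chain_list by lia. destruct (Nat.eqb_spec j i); simpl; auto.
      * rewrite nth_chain_list by lia. rewrite Nat.eqb_refl. apply IH; auto.
Qed.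

Lemma chain_inj d : 1 <= d -> forall s1 s2, validS d s1 -> validS d s2 ->
  chain d s1 = chain d s2 -> s1 = s2.
Proof.
  intros Hd s1. induction s1 as [|i1 s1 IH]; intros s2 H1 H2 E.
  - assert (length ([] : list nat) = length s2).
    { apply (f_equal internal) in E. rewrite !internal_chain in E by auto. lia. }
    destruct s2; [auto| simpl in H; lia].
  - destruct s2 as [|i2 s2].
    + apply (f_equal internal) in E. rewrite !internal_chain in E by auto. simpl in E. lia.
    + inversion H1; inversion H2; subst. simpl chain in E. injection E as E.
      apply (f_equal (fun l => nth i1 l leaf)) in E.
      rewrite !nth_chain_list in E by auto. rewrite Nat.eqb_refl in E.
      destruct (Nat.eqb_spec i1 i2).
      * subst. f_equal. apply IH; auto.
      * apply (f_equal internal) in E. rewrite internal_chain in E by auto. simpl in E. lia.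
Qed.

Fixpoint seqs (d n : nat) : list (list nat) :=
  match n with
  | 0 => [[]]
  | S n' => flat_map (fun i => map (cons i) (seqs d n')) (seq 0 d)
  end.

Lemma seqs_length d n : length (seqs d n) = d ^ n.
Proof.
  induction n; simpl; auto. rewrite (flat_map_constant_length (c := d ^ n)).
  - rewrite length_seq. lia.
  - intros; rewrite length_map; auto.
Qed.

Lemma seqs_mem d n sg : In sg (seqs d n) -> length sg = n /\ validS d sg.
Proof.
  revert sg; induction n; intros sg H; simpl in H.
  - destruct H as [<-|[]]. split; [reflexivity| constructor].
  - apply in_flat_map in H as [i [Hi H]]. apply in_map_iff in H as [s' [<- Hs']].
    apply IHn in Hs' as [H1 H2]. apply in_seq in Hi. split; simpl; auto.
    constructor; auto. lia.
Qed.

Lemma seqs_NoDup d n : NoDup (seqs d n).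
Proof.
  induction n; simpl; [constructor; [intros []|constructor]|].
  apply NoDup_flat_map'.
  - apply seq_NoDup.
  - intros i _. apply NoDup_map_on; auto. intros x y _ _ E; inversion E; auto.
  - intros i j z _ _ H1 H2. apply in_map_iff in H1 as [x [<- _]].
    apply in_map_iff in H2 as [y [E _]]. inversion E; auto.
Qed.

Lemma perfect_count d p : 1 <= d -> 1 <= p ->
  d ^ (p - 1) <= length (filter (fun t => negb (NPp p t)) (enumT d p)).
Proof.
  intros Hd Hp. rewrite <- (seqs_length d (p - 1)), <- (length_map (chain d)).
  apply NoDup_incl_length.
  - apply NoDup_map_on; [|apply seqs_NoDup].
    intros x y Hx Hy E. apply seqs_mem in Hx as [_ Hx]. apply seqs_mem in Hy as [_ Hy].
    apply (chain_inj d); auto.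
  - intros t Ht. apply in_map_iff in Ht as [sg [<- Hsg]]. apply seqs_mem in Hsg as [Hl Hv].
    apply filter_In. split.
    + apply mem_enumT; auto. split; [apply dtree_chain; auto|].
      rewrite internal_chain by auto. lia.
    + unfold NPp. rewrite negb_involutive. destruct (chain d sg) eqn:E.
      rewrite is_perfect_eq, <- E. replace p with (S (length sg)) by lia.
      rewrite perfect_chain; auto.
Qed.

Lemma nt_p_le d p : 1 <= d -> 1 <= p ->
  ntq d (NPp p) p + d ^ (p - 1) <= a d 1 p.
Proof.
  intros Hd Hp. pose proof (perfect_count d p Hd Hp).
  pose proof (filter_split (NPp p) (enumT d p)). rewrite length_enumT in H0.
  unfold ntq. lia.
Qed.

Lemma perfect1 d : 1 <= d -> forall t, is_dtree d t = true -> 1 <= internal t ->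
  is_perfect 1 t = true.
Proof.
  intros Hd t. induction t as [cs IH] using tree_ind2. intros Ht Hi.
  destruct cs as [|c cs']; [simpl in Hi; lia|].
  rewrite is_perfect_eq. apply orb_true_iff.
  destruct (existsb (fun x => negb (is_leaf x)) (c :: cs')) eqn:E.
  - right. apply existsb_exists in E as [x [Hx Hx2]]. apply existsb_exists. exists x. split; auto.
    rewrite Forall_forall in IH. apply IH; auto.
    + destruct (dtree_node_elim _ _ Ht) as [E|[_ HF]]; [discriminate|].
      rewrite Forall_forall in HF; auto.
    + destruct x as [[|y ys]]; [discriminate|]. rewrite internal_node by discriminate. lia.
  - left. rewrite perfect_from_eq. apply existsb_exists. exists 0. split.
    + apply in_seq. simpl; lia.
    + apply andb_true_iff. split; [|reflexivity]. apply forallb_forall. intros j Hj.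
      apply orb_true_iff. right. apply in_seq in Hj.
      assert (HH : forall x, In x (c :: cs') -> is_leaf x = true).
      { intros x Hx. destruct (is_leaf x) eqn:Ex; auto.
        assert (existsb (fun x => negb (is_leaf x)) (c :: cs') = true)
          by (apply existsb_exists; exists x; rewrite Ex; auto). congruence. }
      apply HH, nth_In. lia.
Qed.

Open Scope R_scope.

Fixpoint sumR (g : nat -> R) (m : nat) : R :=
  match m with 0 => g 0%nat | S m' => sumR g m' + g (S m') end.

Lemma INR_list_sum_seq (g : nat -> nat) m :
  INR (list_sum (map g (seq 0 (S m)))) = sumR (fun j => INR (g j)) m.
Proof.
  induction m as [|m IH].
  - simpl. rewrite Nat.add_0_r. reflexivity.
  - rewrite seq_S, map_app, list_sum_app, plus_INR, IH. simpl. rewrite Nat.add_0_r. reflexivity.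
Qed.

Lemma sumR_ext f g m : (forall j, (j <= m)%nat -> f j = g j) -> sumR f m = sumR g m.
Proof. induction m; intros H; simpl; [apply H; lia|]. rewrite IHm, H; auto; intros; apply H; lia. Qed.

Lemma sumR_le f g m : (forall j, (j <= m)%nat -> f j <= g j) -> sumR f m <= sumR g m.
Proof.
  induction m; intros H; simpl; [apply H; lia|].
  apply Rplus_le_compat; [apply IHm; intros; apply H; lia| apply H; lia].
Qed.

Lemma sumR_nonneg f m : (forall j, (j <= m)%nat -> 0 <= f j) -> 0 <= sumR f m.
Proof.
  induction m; intros H; simpl; [apply H; lia|].
  apply Rplus_le_le_0_compat; [apply IHm; intros; apply H; lia| apply H; lia].
Qed.

Lemma sumR_minus f g m : sumR (fun j => f j - g j) m = sumR f m - sumR g m.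
Proof. induction m; simpl; [|rewrite IHm]; ring. Qed.

Lemma sumR_indicator (p : nat) (y : R) m :
  sumR (fun j => if Nat.eqb j p then y else 0) m = if Nat.leb p m then y else 0.
Proof.
  induction m; cbn [sumR].
  - destruct p; simpl; auto.
  - rewrite IHm. destruct (Nat.eqb_spec (S m) p), (Nat.leb_spec p m), (Nat.leb_spec p (S m));
      try lia; ring.
Qed.

Lemma sumR_scal_r f c m : sumR (fun j => f j * c) m = sumR f m * c.
Proof. induction m; simpl; [|rewrite IHm]; ring. Qed.

Fixpoint cp (x : nat -> R) (s m : nat) : R :=
  match s with
  | 0 => if Nat.eqb m 0 then 1 else 0
  | S s' => sumR (fun j => x j * cp x s' (m - j)) m
  end.

Lemma cp_nonneg x : (forall j, 0 <= x j) -> forall s m, 0 <= cp x s m.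
Proof.
  intros Hx s. induction s; intros m; simpl.
  - destruct (m =? 0)%nat; lra.
  - apply sumR_nonneg. intros j _. apply Rmult_le_pos; auto.
Qed.

Lemma cp_mono x y : (forall j, 0 <= x j) -> (forall j, x j <= y j) ->
  forall s m, cp x s m <= cp y s m.
Proof.
  intros H0 H1 s. induction s; intros m; simpl; [lra|].
  apply sumR_le. intros j _. apply Rmult_le_compat; auto; apply cp_nonneg; auto.
Qed.

Lemma cp_scale x (r mu : R) : forall s n,
  cp (fun j => x j * r ^ j * mu) s n = cp x s n * r ^ n * mu ^ s.
Proof.
  intros s. induction s; intros n; simpl.
  - destruct (Nat.eqb_spec n 0); subst; simpl; ring.
  - transitivity (sumR (fun j => (x j * cp x s (n - j)) * (r ^ n * (mu * mu ^ s))) n).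
    + apply sumR_ext. intros j Hj. rewrite IHs.
      assert (E : r ^ n = r ^ j * r ^ (n - j)) by (rewrite <- pow_add; f_equal; lia).
      rewrite E. ring.
    + rewrite sumR_scal_r. ring.
Qed.

Lemma cp_a d : (1 <= d)%nat -> forall s m, cp (fun j => INR (a d 1 j)) s m = INR (a d s m).
Proof.
  intros Hd s. induction s; intros m.
  - simpl. destruct m; [rewrite a_s0; reflexivity| rewrite a_0S; reflexivity].
  - rewrite a_conv by auto. rewrite INR_list_sum_seq. simpl cp.
    apply sumR_ext. intros j _. rewrite mult_INR, IHs. reflexivity.
Qed.

Lemma nf_bound d q (x : nat -> R) : (1 <= d)%nat -> forall m,
  (forall j, (j <= m)%nat -> INR (ntq d q j) <= x j) -> (forall j, 0 <= x j) ->
  forall s m', (m' <= m)%nat -> INR (nfq d q s m') <= cp x s m'.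
Proof.
  intros Hd m Hnt Hx s. induction s; intros m' Hm'.
  - unfold nfq. destruct m'; simpl; lra.
  - rewrite nfq_conv by auto. rewrite INR_list_sum_seq. simpl cp.
    apply sumR_le. intros j Hj. rewrite mult_INR. apply Rmult_le_compat.
    + apply pos_INR.
    + apply pos_INR.
    + apply Hnt; lia.
    + apply IHs; lia.
Qed.

Lemma fact_ratio (P Q e f : nat) : (forall i, (P + i + 1) * e <= f * (Q + i + 1))%nat ->
  forall j, (fact (P + j) * fact Q * e ^ j <= f ^ j * fact P * fact (Q + j))%nat.
Proof.
  intros H j. induction j.
  - rewrite !Nat.add_0_r. simpl. lia.
  - replace (P + S j)%nat with (S (P + j)) by lia. replace (Q + S j)%nat with (S (Q + j)) by lia.
    rewrite !fact_simpl. simpl Nat.pow.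
    specialize (H j).
    replace (S (P + j) * fact (P + j) * fact Q * (e * e ^ j))%nat
      with ((S (P + j) * e) * (fact (P + j) * fact Q * e ^ j))%nat by ring.
    replace (f * f ^ j * fact P * (S (Q + j) * fact (Q + j)))%nat
      with ((f * S (Q + j)) * (f ^ j * fact P * fact (Q + j)))%nat by ring.
    apply Nat.mul_le_mono; [lia| exact IHj].
Qed.

Lemma fact_pos' n : (0 < fact n)%nat.
Proof. apply lt_O_fact. Qed.

Lemma ratio_ii d' : (1 <= d')%nat -> forall n,
  INR (a (S d') (S d') n) <= (INR (S d') / INR d') ^ 2 * INR (a (S d') d' n).
Proof.
  intros Hd' n. destruct d' as [|d'']; [lia|].
  pose proof (a_closed (S d'') n (S d'')) as H1.
  pose proof (a_closed (S d'') n d'') as H2.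
  set (A := a (S (S d'')) (S (S d'')) n) in *.
  set (D := a (S (S d'')) (S d'') n) in *.
  replace (S d'' * n + S (S d''))%nat with (S (S d'' * n + S d'')) in H1 by lia.
  replace (S (S d'') * n + S d'')%nat with (S (S (S d'') * n + d'')) in H1 by lia.
  rewrite !fact_simpl in H1.
  set (F := fact n) in *. set (Y := fact (S d'' * n + S d'')) in *.
  set (X := fact (S (S d'') * n + d'')) in *.
  assert (E : (A * S (S d'' * n + S d'') * S d'' * (F * Y) =
               S (S d'') * S (S (S d'') * n + d'') * D * (F * Y))%nat).
  { transitivity (S d'' * (A * F * (S (S d'' * n + S d'') * Y)))%nat; [ring|].
    rewrite H1. transitivity (S (S d'') * S (S (S d'') * n + d'') * (D * F * Y))%nat; [|ring].
    rewrite H2. ring. }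
  apply Nat.mul_cancel_r in E.
  2: { unfold F, Y. pose proof (fact_pos' n). pose proof (fact_pos' (S d'' * n + S d'')). lia. }
  apply (f_equal INR) in E. rewrite !mult_INR in E.
  set (a0 := INR A) in *. set (b0 := INR D) in *.
  set (L := INR (S (S d'' * n + S d''))) in *.
  set (M := INR (S (S (S d'') * n + d''))) in *.
  assert (HL : 0 < L) by (unfold L; apply lt_0_INR; lia).
  assert (Hdp : 0 < INR (S d'')) by (apply lt_0_INR; lia).
  assert (Hb : 0 <= b0) by apply pos_INR.
  assert (HLM : INR (S d'') * M <= INR (S (S d'')) * L).
  { unfold L, M. rewrite <- !mult_INR. apply le_INR. nia. }
  apply Rmult_le_reg_r with (r := INR (S d'') ^ 2 * L).
  { apply Rmult_lt_0_compat; [apply pow_lt|]; auto. }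
  replace ((INR (S (S d'')) / INR (S d'')) ^ 2 * b0 * (INR (S d'') ^ 2 * L))
    with (INR (S (S d'')) ^ 2 * b0 * L) by (field; lra).
  replace (a0 * (INR (S d'') ^ 2 * L)) with (INR (S d'') * (a0 * L * INR (S d''))) by ring.
  rewrite E.
  replace (INR (S d'') * (INR (S (S d'')) * M * b0)) with (INR (S (S d'')) * b0 * (INR (S d'') * M)) by ring.
  replace (INR (S (S d'')) ^ 2 * b0 * L) with (INR (S (S d'')) * b0 * (INR (S (S d'')) * L)) by ring.
  apply Rmult_le_compat_l; auto.
  apply Rmult_le_pos; auto. apply pos_INR.
Qed.

Lemma ratio_i d' : (1 <= d')%nat -> forall n,
  INR (a (S d') d' (S n)) <= INR (S d') * (INR (S d') / INR d') ^ d' * INR (a (S d') d' n).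
Proof.
  intros Hd' n. destruct d' as [|d'']; [lia|].
  pose proof (a_closed (S d'') (S n) d'') as H1.
  pose proof (a_closed (S d'') n d'') as H0.
  set (A1 := a (S (S d'')) (S d'') (S n)) in *.
  set (A0 := a (S (S d'')) (S d'') n) in *.
  set (U := (S (S d'') * n + d'')%nat).
  set (V := (S d'' * n + S d'')%nat).
  fold V in H0. fold U in H0.
  replace (S d'' * S n + S d'')%nat with (V + S d'')%nat in H1 by (unfold V; lia).
  replace (S (S d'') * S n + d'')%nat with (S U + S d'')%nat in H1 by (unfold U; lia).
  pose proof (fact_ratio (S U) V (S d'') (S (S d''))) as FR.
  assert (FRc : forall i, ((S U + i + 1) * S d'' <= S (S d'') * (V + i + 1))%nat)
    by (intros i; unfold U, V; nia).
  specialize (FR FRc (S d'')).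
  assert (K : (A1 * S n * S d'' ^ S d'' * (fact n * fact V * fact (V + S d''))
            <= S (S d'') ^ S d'' * S U * A0 * (fact n * fact V * fact (V + S d'')))%nat).
  { rewrite fact_simpl in H1.
    transitivity (S d'' * (fact (S U + S d'') * fact V * S d'' ^ S d''))%nat.
    - replace (A1 * S n * S d'' ^ S d'' * (fact n * fact V * fact (V + S d'')))%nat
        with ((A1 * (S n * fact n) * fact (V + S d'')) * fact V * S d'' ^ S d'')%nat by ring.
      rewrite H1. lia.
    - transitivity (S d'' * (S (S d'') ^ S d'' * fact (S U) * fact (V + S d'')))%nat.
      + apply Nat.mul_le_mono_l. exact FR.
      + rewrite fact_simpl.
        replace (S (S d'') ^ S d'' * S U * A0 * (fact n * fact V * fact (V + S d'')))%nat
          with (S (S d'') ^ S d'' * S U * fact (V + S d'') * (A0 * fact n * fact V))%nat by ring.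
        rewrite H0. lia. }
  apply Nat.mul_le_mono_pos_r in K.
  2: { pose proof (fact_pos' n). pose proof (fact_pos' V). pose proof (fact_pos' (V + S d'')). nia. }
  apply le_INR in K. rewrite !mult_INR, !pow_INR in K.
  assert (HU : INR (S U) <= INR (S (S d'')) * INR (S n)).
  { rewrite <- mult_INR. apply le_INR. unfold U. nia. }
  set (dd := INR (S (S d''))) in *. set (de := INR (S d'')) in *.
  assert (Hde : 0 < de) by (apply lt_0_INR; lia).
  assert (Hn : 0 < INR (S n)) by (apply lt_0_INR; lia).
  assert (HA0 : 0 <= INR A0) by apply pos_INR.
  assert (Hdd : 0 <= dd) by apply pos_INR.
  apply Rmult_le_reg_r with (r := INR (S n) * de ^ S d'').
  { apply Rmult_lt_0_compat; auto. apply pow_lt; auto. }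
  unfold Rdiv. rewrite Rpow_mult_distr, pow_inv.
  replace (dd * (dd ^ S d'' * / de ^ S d'') * INR A0 * (INR (S n) * de ^ S d''))
    with (dd ^ S d'' * (dd * INR (S n)) * INR A0) by (field; apply pow_nonzero; lra).
  eapply Rle_trans; [|apply Rmult_le_compat_r; [exact HA0|];
     apply Rmult_le_compat_l; [apply pow_le; auto| exact HU]].
  lra.
Qed.

Definition gam (d' : nat) : R := INR (S d') * (INR (S d') / INR d') ^ d'.

Lemma gam_pos d' : (1 <= d')%nat -> 0 < gam d'.
Proof.
  intros H. unfold gam. apply Rmult_lt_0_compat; [apply lt_0_INR; lia|].
  apply pow_lt. apply Rdiv_lt_0_compat; apply lt_0_INR; lia.
Qed.

Lemma ratio_chain d' : (1 <= d')%nat -> forall n j,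
  INR (a (S d') d' (n + j)) <= gam d' ^ j * INR (a (S d') d' n).
Proof.
  intros Hd' n j. induction j.
  - rewrite Nat.add_0_r. simpl. lra.
  - replace (n + S j)%nat with (S (n + j)) by lia.
    eapply Rle_trans; [apply ratio_i; auto|]. fold (gam d').
    simpl pow. rewrite Rmult_assoc. apply Rmult_le_compat_l; auto.
    left; apply gam_pos; auto.
Qed.

Lemma ratio_total d' p : (1 <= d')%nat -> forall m, (p <= m)%nat ->
  INR (a (S d') (S d') m) <=
    ((INR (S d') / INR d') ^ 2 * gam d' ^ p) * INR (a (S d') d' (m - p)).
Proof.
  intros Hd' m Hm. eapply Rle_trans; [apply ratio_ii; auto|].
  rewrite Rmult_assoc. apply Rmult_le_compat_l.
  - apply pow_le. left. apply Rdiv_lt_0_compat; apply lt_0_INR; lia.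
  - replace m with ((m - p) + p)%nat at 1 by lia. apply ratio_chain; auto.
Qed.

Lemma exp_nat n x : exp (INR n * x) = exp x ^ n.
Proof.
  induction n.
  - simpl. rewrite Rmult_0_l, exp_0. reflexivity.
  - rewrite S_INR, Rmult_plus_distr_r, Rmult_1_l, exp_plus, IHn. simpl. ring.
Qed.

Lemma q_le_e d' : (1 <= d')%nat -> (INR (S d') / INR d') ^ d' <= exp 1.
Proof.
  intros H. assert (Hd : 0 < INR d') by (apply lt_0_INR; lia).
  replace (INR (S d') / INR d') with (1 + / INR d') by (rewrite S_INR; field; lra).
  replace (exp 1) with (exp (/ INR d') ^ d').
  - apply pow_incr. split.
    + assert (0 < / INR d') by (apply Rinv_0_lt_compat; auto). lra.
    + apply exp_ineq1_le.
  - rewrite <- exp_nat. f_equal. field. lra.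
Qed.

Lemma e_bound : 6 <= exp 1 ^ 2.
Proof.
  assert (H : exp 1 = exp (/ 8) ^ 8).
  { rewrite <- exp_nat. f_equal. simpl. field. }
  assert (H2 : 1 + / 8 <= exp (/ 8)) by apply exp_ineq1_le.
  assert (H3 : (1 + / 8) ^ 8 <= exp (/ 8) ^ 8) by (apply pow_incr; lra).
  rewrite <- H in H3. assert (H4 : 2.5 <= exp 1) by (simpl in H3; lra).
  simpl. nra.
Qed.

Lemma nat_ineq d' p : (1 <= d')%nat -> (2 <= p)%nat -> ~ (d' = 1%nat /\ p = 2%nat) ->
  ((p * d' + 1) * (S d') ^ 2 <= 2 * p * d' ^ 2 * (S d') ^ (p - 1))%nat.
Proof.
  intros H1 H2 H3.
  destruct (Nat.eq_dec d' 1) as [->|Hne].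
  - assert (3 <= p)%nat by lia.
    assert (4 <= 2 ^ (p - 1))%nat.
    { replace 4%nat with (2 ^ 2)%nat by reflexivity. apply Nat.pow_le_mono_r; lia. }
    simpl. nia.
  - assert (S d' <= S d' ^ (p - 1))%nat.
    { replace (S d') with (S d' ^ 1)%nat at 1 by apply Nat.pow_1_r.
      apply Nat.pow_le_mono_r; lia. }
    assert (2 <= d')%nat by lia. simpl. nia.
Qed.

Lemma num_ineq d' p : (1 <= d')%nat -> (2 <= p)%nat ->
  kappa p (S d') * INR (p * d' + 1) * ((INR (S d') / INR d') ^ 2 * gam d' ^ p)
  <= INR (S d' ^ (p - 1)).
Proof.
  intros H1 H2.
  set (dl := INR (S d')). set (dp := INR d'). set (e := exp 1).
  set (q := (dl / dp) ^ d'). set (P := INR p). set (M := INR (p * d' + 1)).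
  assert (Hdp : 0 < dp) by (apply lt_0_INR; lia).
  assert (Hdl : 0 < dl) by (apply lt_0_INR; lia).
  assert (He : 0 < e) by apply exp_pos.
  assert (HP : 0 < P) by (apply lt_0_INR; lia).
  assert (Hq0 : 0 <= q) by (apply pow_le; left; apply Rdiv_lt_0_compat; auto).
  assert (Hstar : M * dl ^ 2 * q ^ p <= 2 * P * dp ^ 2 * e ^ p * dl ^ (p - 1)).
  { destruct (classic (d' = 1%nat /\ p = 2%nat)) as [[-> ->]|Hn].
    - unfold M, P, dl, dp, q. simpl. pose proof e_bound. fold e in H. simpl in H.
      assert (E1 : dl = 2) by (unfold dl; simpl; ring). assert (E2 : dp = 1) by (unfold dp; simpl; ring).
      rewrite E1, E2. unfold Rdiv. replace (/ 1) with 1 by field. lra.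
    - pose proof (nat_ineq d' p H1 H2 Hn) as N. apply le_INR in N.
      rewrite !mult_INR, !pow_INR, plus_INR in N. fold M in N. simpl (INR 2) in N.
      assert (EM : M = INR (p * d') + INR 1) by (unfold M; rewrite plus_INR; reflexivity).
      rewrite <- EM in N.
      fold dl dp P in N.
      assert (Hqe : q ^ p <= e ^ p) by (apply pow_incr; split; auto; apply q_le_e; auto).
      apply Rle_trans with (M * dl ^ 2 * e ^ p).
      + apply Rmult_le_compat_l; auto. apply Rmult_le_pos; [apply pos_INR| apply pow_le; lra].
      + replace (2 * P * dp ^ 2 * e ^ p * dl ^ (p - 1)) with ((2 * P * dp ^ 2 * dl ^ (p - 1)) * e ^ p) by ring.
        apply Rmult_le_compat_r; [apply pow_le; lra|]. lra. }
  unfold kappa, gam. fold dl dp q e. rewrite pow_INR. fold dl.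
  rewrite Rpow_mult_distr. fold P.
  replace (/ (2 * P * dl ^ p * e ^ p) * M * ((dl / dp) ^ 2 * (dl ^ p * q ^ p)))
    with ((M * dl ^ 2 * q ^ p) / (2 * P * dp ^ 2 * e ^ p))
    by (field; repeat split; try apply pow_nonzero; lra).
  apply Rmult_le_reg_r with (r := 2 * P * dp ^ 2 * e ^ p).
  { repeat apply Rmult_lt_0_compat; try apply pow_lt; lra. }
  replace (M * dl ^ 2 * q ^ p / (2 * P * dp ^ 2 * e ^ p) * (2 * P * dp ^ 2 * e ^ p))
    with (M * dl ^ 2 * q ^ p) by (field; repeat split; try apply pow_nonzero; lra).
  lra.
Qed.

Definition rho (p d : nat) : R := exp (- kappa p d).
Definition beta (d' p : nat) (j : nat) : R :=
  INR (a (S d') 1 j) * rho p (S d') ^ j * / rho p (S d') ^ p.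
Definition cc (d' p : nat) : R := INR (S d' ^ (p - 1)).
Definition Kp (d' p : nat) (j : nat) : R :=
  beta d' p j - (if Nat.eqb j p then cc d' p else 0).

Lemma kappa_pos p d : (1 <= p)%nat -> (1 <= d)%nat -> 0 < kappa p d.
Proof.
  intros Hp Hd. unfold kappa. apply Rinv_0_lt_compat.
  assert (0 < INR p) by (apply lt_0_INR; lia). assert (0 < INR d) by (apply lt_0_INR; lia).
  repeat apply Rmult_lt_0_compat; try apply pow_lt; try lra. apply exp_pos.
Qed.

Lemma rho_pos p d : 0 < rho p d.
Proof. apply exp_pos. Qed.

Lemma rho_le1 p d : (1 <= p)%nat -> (1 <= d)%nat -> rho p d <= 1.
Proof.
  intros. unfold rho. rewrite <- exp_0. left. apply exp_increasing.
  pose proof (kappa_pos p d H H0). lra.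
Qed.

Lemma pow_le1 x n : 0 <= x <= 1 -> x ^ n <= 1.
Proof.
  intros H. induction n; simpl; [lra|].
  replace 1 with (1 * 1) by ring. apply Rmult_le_compat; try lra. apply pow_le; lra.
Qed.

Lemma beta_nonneg d' p j : 0 <= beta d' p j.
Proof.
  unfold beta. pose proof (rho_pos p (S d')).
  apply Rmult_le_pos; [apply Rmult_le_pos; [apply pos_INR| apply pow_le; lra]|].
  left. apply Rinv_0_lt_compat, pow_lt; lra.
Qed.

Lemma beta_p d' p : beta d' p p = INR (a (S d') 1 p).
Proof.
  unfold beta. pose proof (rho_pos p (S d')). field. apply pow_nonzero. lra.
Qed.

Lemma beta_ge d' p j : (1 <= p)%nat -> (j <= p)%nat -> INR (a (S d') 1 j) <= beta d' p j.
Proof.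
  intros Hp Hj. unfold beta. pose proof (rho_pos p (S d')) as Hr.
  pose proof (rho_le1 p (S d') Hp ltac:(lia)) as Hr1.
  set (r := rho p (S d')) in *.
  assert (E : r ^ p = r ^ j * r ^ (p - j)) by (rewrite <- pow_add; f_equal; lia).
  rewrite E.
  assert (0 < r ^ j) by (apply pow_lt; lra). assert (0 < r ^ (p - j)) by (apply pow_lt; lra).
  assert (r ^ (p - j) <= 1) by (apply pow_le1; lra).
  replace (INR (a (S d') 1 j) * r ^ j * / (r ^ j * r ^ (p - j)))
    with (INR (a (S d') 1 j) * / r ^ (p - j)) by (field; lra).
  pose proof (pos_INR (a (S d') 1 j)).
  rewrite <- (Rmult_1_r (INR (a (S d') 1 j))) at 1.
  apply Rmult_le_compat_l; auto.
  rewrite <- Rinv_1. apply Rinv_le_contravar; lra.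
Qed.

Lemma Kp_nonneg d' p : (1 <= p)%nat -> forall j, 0 <= Kp d' p j.
Proof.
  intros Hp j. unfold Kp. destruct (Nat.eqb_spec j p).
  - subst. rewrite beta_p. unfold cc. pose proof (nt_p_le (S d') p ltac:(lia) Hp) as H.
    assert (H' : (S d' ^ (p - 1) <= a (S d') 1 p)%nat) by lia. apply le_INR in H'. lra.
  - pose proof (beta_nonneg d' p j). lra.
Qed.

Lemma Kp_le_beta d' p j : Kp d' p j <= beta d' p j.
Proof.
  unfold Kp. destruct (j =? p)%nat; [|lra]. unfold cc. pose proof (pos_INR (S d' ^ (p - 1))). lra.
Qed.

Lemma cp_beta d' p s n :
  cp (beta d' p) s n = INR (a (S d') s n) * rho p (S d') ^ n * (/ rho p (S d') ^ p) ^ s.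
Proof.
  unfold beta. rewrite cp_scale, cp_a by lia. reflexivity.
Qed.

Lemma core d' p m : (1 <= d')%nat -> (2 <= p)%nat -> (p <= m)%nat ->
  INR (a (S d') (S d') m) - cc d' p * INR (a (S d') d' (m - p))
  <= rho p (S d') ^ (p * d' + 1) * INR (a (S d') (S d') m).
Proof.
  intros Hd' Hp Hm.
  set (A := INR (a (S d') (S d') m)). set (D := INR (a (S d') d' (m - p))).
  set (G := (INR (S d') / INR d') ^ 2 * gam d' ^ p).
  set (k := kappa p (S d')). set (M := INR (p * d' + 1)).
  assert (h1 : 1 - rho p (S d') ^ (p * d' + 1) <= k * M).
  { unfold rho. rewrite <- exp_nat. pose proof (exp_ineq1_le (INR (p * d' + 1) * - k)).
    fold k M in H |- *. nra. }
  assert (h2 : A <= G * D) by (apply ratio_total; auto).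
  assert (h3 : k * M * G <= cc d' p) by (apply num_ineq; auto).
  assert (hA : 0 <= A) by apply pos_INR. assert (hD : 0 <= D) by apply pos_INR.
  assert (hk : 0 <= k * M).
  { apply Rmult_le_pos; [left; apply kappa_pos; lia| apply pos_INR]. }
  assert (A - rho p (S d') ^ (p * d' + 1) * A <= cc d' p * D).
  { apply Rle_trans with (k * M * A).
    - replace (A - rho p (S d') ^ (p * d' + 1) * A) with ((1 - rho p (S d') ^ (p * d' + 1)) * A) by ring.
      apply Rmult_le_compat_r; auto.
    - apply Rle_trans with (k * M * G * D).
      + replace (k * M * G * D) with ((k * M) * (G * D)) by ring. apply Rmult_le_compat_l; auto.
      + apply Rmult_le_compat_r; auto. }
  lra.
Qed.

Lemma key d' p m : (1 <= d')%nat -> (2 <= p)%nat -> (p <= m)%nat ->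
  cp (Kp d' p) (S d') m <= beta d' p (S m).
Proof.
  intros Hd' Hp Hm.
  assert (HK0 : forall j, 0 <= Kp d' p j) by (apply Kp_nonneg; lia).
  assert (Hb0 : forall j, 0 <= beta d' p j) by (intros; apply beta_nonneg).
  set (X := fun j => cp (beta d' p) d' (m - j)).
  assert (S1 : cp (Kp d' p) (S d') m <= sumR (fun j => Kp d' p j * X j) m).
  { simpl cp. apply sumR_le. intros j _. apply Rmult_le_compat_l; auto.
    apply cp_mono; auto. intros; apply Kp_le_beta. }
  assert (S2 : sumR (fun j => Kp d' p j * X j) m =
               cp (beta d' p) (S d') m - cc d' p * X p).
  { transitivity (sumR (fun j => beta d' p j * X j - (if Nat.eqb j p then cc d' p * X p else 0)) m).
    - apply sumR_ext. intros j _. unfold Kp. destruct (Nat.eqb_spec j p); [subst|]; ring.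
    - rewrite sumR_minus, sumR_indicator. destruct (Nat.leb_spec p m); [|lia]. reflexivity. }
  unfold X in S1, S2. rewrite !cp_beta in S2.
  pose proof (core d' p m Hd' Hp Hm) as C.
  assert (Ea : a (S d') 1 (S m) = a (S d') (S d') m) by (rewrite a_SS; reflexivity).
  unfold beta at 1. rewrite Ea.
  eapply Rle_trans; [apply S1|]. rewrite S2. clear S1 S2.
  set (A := INR (a (S d') (S d') m)) in *. set (D := INR (a (S d') d' (m - p))) in *.
  set (r := rho p (S d')) in *. set (c := cc d' p) in *.
  assert (Hr : 0 < r) by apply rho_pos.
  set (R1 := r ^ p).
  assert (HR1 : 0 < R1) by (apply pow_lt; auto).
  assert (E1 : r ^ m = r ^ (m - p) * R1) by (unfold R1; rewrite <- pow_add; f_equal; lia).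
  assert (E2 : r ^ (p * d' + 1) = R1 ^ d' * r) by (unfold R1; rewrite pow_add, pow_mult; ring).
  rewrite E2 in C. rewrite E1. simpl pow. rewrite E1.
  set (Q := R1 ^ d') in *. assert (HQ : 0 < Q) by (apply pow_lt; auto).
  set (s := r ^ (m - p)). assert (Hs : 0 < s) by (apply pow_lt; auto).
  rewrite pow_inv. fold Q.
  replace (A * (s * R1) * (/ R1 * / Q) - c * (D * s * / Q))
    with ((s / Q) * (A - c * D)) by (field; lra).
  replace (A * (r * (s * R1)) * / R1) with ((s / Q) * (Q * r * A)) by (field; lra).
  apply Rmult_le_compat_l; [|lra].
  unfold Rdiv. apply Rmult_le_pos; [lra| left; apply Rinv_0_lt_compat; auto].
Qed.

Lemma main_step d' p : (1 <= d')%nat -> (2 <= p)%nat -> forall j,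
  (forall j', (j' < j)%nat -> INR (ntq (S d') (NPp p) j') <= Kp d' p j') ->
  INR (ntq (S d') (NPp p) j) <= Kp d' p j.
Proof.
  intros Hd' Hp j IH.
  destruct (lt_eq_lt_dec j p) as [[Hlt|Heq]|Hgt].
  - unfold Kp. destruct (Nat.eqb_spec j p); [lia|]. rewrite Rminus_0_r.
    apply Rle_trans with (INR (a (S d') 1 j)).
    + apply le_INR, nt_le_a.
    + apply beta_ge; lia.
  - subst j. unfold Kp. rewrite Nat.eqb_refl, beta_p. unfold cc.
    pose proof (nt_p_le (S d') p ltac:(lia) ltac:(lia)) as H.
    assert (H' : (ntq (S d') (NPp p) p <= a (S d') 1 p - S d' ^ (p - 1))%nat) by lia.
    apply le_INR in H'. rewrite minus_INR in H' by lia. exact H'.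
  - destruct j as [|m]; [lia|].
    unfold Kp. destruct (Nat.eqb_spec (S m) p); [lia|]. rewrite Rminus_0_r.
    apply Rle_trans with (INR (nfq (S d') (NPp p) (S d') m)).
    + apply le_INR, nt_S_le; lia.
    + eapply Rle_trans; [apply (nf_bound (S d') (NPp p) (Kp d' p) ltac:(lia) m)|].
      * intros j' Hj'. apply IH. lia.
      * apply Kp_nonneg; lia.
      * lia.
      * apply key; lia.
Qed.

Lemma main_nt d' p : (1 <= d')%nat -> (2 <= p)%nat -> forall j,
  INR (ntq (S d') (NPp p) j) <= Kp d' p j.
Proof.
  intros Hd' Hp j. induction j as [j IH] using lt_wf_ind.
  apply main_step; auto.
Qed.

Lemma div_le_helper x y E : 0 <= x -> 0 <= y -> 0 < E -> x <= y * E -> x / y <= E.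
Proof.
  intros Hx Hy HE H. destruct (Req_dec y 0) as [->|Hne].
  - unfold Rdiv. rewrite Rinv_0, Rmult_0_r. lra.
  - apply Rmult_le_reg_r with y; [lra|]. unfold Rdiv. rewrite Rmult_assoc, Rinv_l by auto. lra.
Qed.

Theorem theorem1p7 (d p k : nat) (s : list tree) :
  (2 <= d)%nat -> (1 <= p)%nat ->
  NoDup s ->
  (forall t : tree, In t s <-> (is_dtree d t = true /\ internal t = k)) ->
  INR (length (filter (fun t => negb (is_perfect p t)) s)) / INR (length s)
    <= exp (- kappa p d * INR (k - p)).
Proof.
  intros Hd Hp Hnd Hs.
  destruct d as [|d']; [lia|]. assert (Hd' : (1 <= d')%nat) by lia.
  assert (HL : length s = a (S d') 1 k).
  { rewrite <- length_enumT. apply same_length; auto.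
    - apply NoDup_enumT; lia.
    - intros x. rewrite Hs, mem_enumT by lia. reflexivity. }
  assert (HF : (length (filter (fun t => negb (is_perfect p t)) s) <= ntq (S d') (NPp p) k)%nat).
  { unfold ntq. apply NoDup_incl_length.
    - apply NoDup_filter'; auto.
    - intros x Hx. apply filter_In in Hx as [Hx1 Hx2]. apply filter_In. split; auto.
      apply mem_enumT; [lia|]. apply Hs; auto. }
  set (F := length (filter (fun t => negb (is_perfect p t)) s)) in *.
  apply div_le_helper; [apply pos_INR| apply pos_INR| apply exp_pos|].
  destruct (le_lt_dec k p) as [Hkp|Hkp].
  - replace (k - p)%nat with 0%nat by lia. simpl INR. rewrite Rmult_0_r, exp_0, Rmult_1_r.
    apply le_INR. apply Nat.le_trans with (1 := HF). rewrite HL. apply nt_le_a.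
  - destruct (Nat.eq_dec p 1) as [->|Hp1].
    + assert (F = 0%nat).
      { assert (F <= length (filter (fun _ => false) s))%nat.
        { apply filter_length_mono. intros x Hx H. apply Hs in Hx as [Hx1 Hx2].
          rewrite (perfect1 (S d') ltac:(lia) x Hx1 ltac:(lia)) in H. discriminate. }
        assert (Z : forall l : list tree, length (filter (fun _ => false) l) = 0%nat) by (intros l; induction l; simpl; auto).
        rewrite Z in H. lia. }
      rewrite H. simpl INR. apply Rmult_le_pos; [apply pos_INR| left; apply exp_pos].
    + assert (Hp2 : (2 <= p)%nat) by lia.
      pose proof (main_nt d' p Hd' Hp2 k) as M.
      unfold Kp in M. destruct (Nat.eqb_spec k p); [lia|]. rewrite Rminus_0_r in M.
      apply le_INR in HF. eapply Rle_trans; [apply HF|]. eapply Rle_trans; [apply M|].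
      unfold beta. rewrite HL.
      assert (E : exp (- kappa p (S d') * INR (k - p)) = rho p (S d') ^ (k - p)).
      { unfold rho. rewrite <- exp_nat. f_equal. ring. }
      rewrite E. pose proof (rho_pos p (S d')) as Hr.
      assert (E2 : rho p (S d') ^ k = rho p (S d') ^ (k - p) * rho p (S d') ^ p)
        by (rewrite <- pow_add; f_equal; lia).
      rewrite E2. right. field. apply pow_nonzero. lra.
Qed.
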